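(* Let $\kappa>-1$, $\Gamma$ a constant real $n\times r$ matrix, and assume that $\kappa=1$ or $\Gamma=0$. Then the equations $$\dot X=P-(1+2\kappa)XP^TX,\qquad \dot P=(1+2\kappa)PX^TP-\Gamma+X\Lambda,\qquad \Lambda=\tfrac12\left(-2P^TP+X^T\Gamma+\Gamma^TX\right)$$ on $T^*V(n,r)$ are equivalent to the matrix equations $$\frac{d}{dt}L(\lambda)=[L(\lambda),A(\lambda)]$$ with spectral parameter $\lambda$, where $L(\lambda),A(\lambda)\in so(n+r)$ are $$L(\lambda)=\begin{pmatrix}-\lambda\Phi & X+\lambda^2\Gamma\\ -X^T-\lambda^2\Gamma^T & \lambda\kappa\Psi\end{pmatrix},\qquad A(\lambda)=\begin{pmatrix}-\Phi & \lambda\Gamma\\ -\lambda\Gamma^T & \kappa\Psi\end{pmatrix},$$ with $\Phi=PX^T-XP^T$ and $\Psi=X^TP-P^TX$.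
   Context: $V(n,r)=\{X\in M_{n,r}(\mathbb R):X^TX=\mathbf I_r\}$, and $T^*V(n,r)$ is realized as the set of pairs $(X,P)$ of real $n\times r$ matrices with $X^TX=\mathbf I_r$, $X^TP+P^TX=0$. The given equations are the Hamiltonian flow of the pendulum Hamiltonian $\frac12\operatorname{tr}(P^TP)-\frac{1+2\kappa}{2}\operatorname{tr}((XP^T)^2)+\operatorname{tr}(X^T\Gamma)$ (for $\Gamma=0$, the geodesic flow of the Jensen metric $ds^2_\kappa$). *)

(* Defs.v *)
From HB Require Import structures.
From mathcomp Require Import all_boot all_order all_algebra.
From mathcomp Require Import all_classical all_reals all_analysis.
Set Implicit Arguments. Unset Strict Implicit. Unset Printing Implicit Defensive.
Import Order.TTheory GRing.Theory Num.Theory.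
Local Open Scope ring_scope.

Definition mx_deriv (R : realType) (m k : nat) (F : R -> 'M[R]_(m, k)) (t : R)
  : 'M[R]_(m, k) :=
  \matrix_(i, j) derive1 (fun s => F s i j) t.

Definition mx_derivable (R : realType) (m k : nat) (F : R -> 'M[R]_(m, k)) :=
  forall t i j, derivable (fun s => F s i j) t 1.

Definition in_TVstar (R : realType) (n r : nat) (X P : 'M[R]_(n, r)) :=
  X^T *m X = 1%:M /\ X^T *m P + P^T *m X = 0.

Definition Phi (R : realType) (n r : nat) (X P : 'M[R]_(n, r)) : 'M[R]_n :=
  P *m X^T - X *m P^T.
Definition Psi (R : realType) (n r : nat) (X P : 'M[R]_(n, r)) : 'M[R]_r :=
  X^T *m P - P^T *m X.

Definition Lambda (R : realType) (n r : nat) (Gamma X P : 'M[R]_(n, r)) : 'M[R]_r :=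
  2^-1 *: (- (2 *: (P^T *m P)) + X^T *m Gamma + Gamma^T *m X).

Definition Xdot_rhs (R : realType) (n r : nat) (kappa : R) (X P : 'M[R]_(n, r))
  : 'M[R]_(n, r) :=
  P - (1 + 2 * kappa) *: (X *m P^T *m X).
Definition Pdot_rhs (R : realType) (n r : nat) (kappa : R) (Gamma X P : 'M[R]_(n, r))
  : 'M[R]_(n, r) :=
  (1 + 2 * kappa) *: (P *m X^T *m P) - Gamma + X *m Lambda Gamma X P.

Definition Lmat (R : realType) (n r : nat) (kappa : R) (Gamma : 'M[R]_(n, r))
  (lam : R) (X P : 'M[R]_(n, r)) : 'M[R]_(n + r) :=
  block_mx (- (lam *: Phi X P)) (X + lam ^+ 2 *: Gamma)
           (- X^T - lam ^+ 2 *: Gamma^T) ((lam * kappa) *: Psi X P).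
Definition Amat (R : realType) (n r : nat) (kappa : R) (Gamma : 'M[R]_(n, r))
  (lam : R) (X P : 'M[R]_(n, r)) : 'M[R]_(n + r) :=
  block_mx (- Phi X P) (lam *: Gamma)
           (- (lam *: Gamma^T)) (kappa *: Psi X P).

(* Main.v *)
Require Import Defs.
From HB Require Import structures.
From mathcomp Require Import all_boot all_order all_algebra.
From mathcomp Require Import all_classical all_reals all_analysis.
From mathcomp Require Import ring.
Import Order.TTheory GRing.Theory Num.Theory.
Set Implicit Arguments. Unset Strict Implicit.
Local Open Scope ring_scope.

Section Der.
Variable R : realType.
Variable t : R.

Definition mxD (m k : nat) (F : R -> 'M[R]_(m, k)) (D : 'M[R]_(m, k)) :=
  forall i j, is_derive t (1:R) (fun s => F s i j) (D i j).

Lemma mxD_deriv m k (F : R -> 'M[R]_(m, k)) D : mxD F D -> mx_deriv F t = D.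
Proof. move=> h; apply/matrixP => i j; rewrite mxE derive1E; exact: derive_val. Qed.

Lemma mxD_of m k (F : R -> 'M[R]_(m, k)) : mx_derivable F -> mxD F (mx_deriv F t).
Proof. move=> h i j; rewrite mxE derive1E; exact: derivableP. Qed.

Lemma mxD_cst m k (C : 'M[R]_(m, k)) : mxD (fun _ => C) 0.
Proof. move=> i j; rewrite mxE; exact: is_derive_cst. Qed.

Lemma mxD_add m k (F G : R -> 'M[R]_(m, k)) F' G' :
  mxD F F' -> mxD G G' -> mxD (fun s => F s + G s) (F' + G').
Proof.
move=> hF hG i j.
have -> : (fun s => (F s + G s) i j) = (fun s => F s i j) + (fun s => G s i j).
  by apply/funext => s; rewrite mxE.
rewrite mxE; exact: is_deriveD.
Qed.

Lemma mxD_opp m k (F : R -> 'M[R]_(m, k)) F' :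
  mxD F F' -> mxD (fun s => - F s) (- F').
Proof.
move=> hF i j.
have -> : (fun s => (- F s) i j) = - (fun s => F s i j).
  by apply/funext => s; rewrite mxE.
rewrite mxE; exact: is_deriveN.
Qed.

Lemma mxD_sub m k (F G : R -> 'M[R]_(m, k)) F' G' :
  mxD F F' -> mxD G G' -> mxD (fun s => F s - G s) (F' - G').
Proof. by move=> hF hG; apply: mxD_add => //; apply: mxD_opp. Qed.

Lemma mxD_scale m k (c : R) (F : R -> 'M[R]_(m, k)) F' :
  mxD F F' -> mxD (fun s => c *: F s) (c *: F').
Proof.
move=> hF i j.
have -> : (fun s => (c *: F s) i j) = c \*: (fun s => F s i j).
  by apply/funext => s; rewrite mxE.
rewrite mxE; exact: is_deriveZ.
Qed.

Lemma mxD_tr m k (F : R -> 'M[R]_(m, k)) F' :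
  mxD F F' -> mxD (fun s => (F s)^T) F'^T.
Proof.
move=> hF i j.
have -> : (fun s => ((F s)^T) i j) = (fun s => F s j i).
  by apply/funext => s; rewrite mxE.
rewrite mxE; exact: hF.
Qed.

Lemma mxD_mul m k l (F : R -> 'M[R]_(m, k)) (G : R -> 'M[R]_(k, l)) F' G' :
  mxD F F' -> mxD G G' -> mxD (fun s => F s *m G s) (F' *m G t + F t *m G').
Proof.
move=> hF hG i j.
have -> : (fun s => (F s *m G s) i j) =
   \sum_(a < k) ((fun s => F s i a) * (fun s => G s a j)).
  by apply/funext => s; rewrite mxE fct_sumE.
rewrite !mxE -big_split /=.
apply: is_derive_sum => a.
apply: is_derive_eq; first exact: is_deriveM.
by rewrite /GRing.scale /= mulrC addrC [G t a j * _]mulrC.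
Qed.

Lemma mxD_block m1 m2 n1 n2 (A : R -> 'M[R]_(m1, n1)) (B : R -> 'M[R]_(m1, n2))
  (C : R -> 'M[R]_(m2, n1)) (D : R -> 'M[R]_(m2, n2)) A' B' C' D' :
  mxD A A' -> mxD B B' -> mxD C C' -> mxD D D' ->
  mxD (fun s => block_mx (A s) (B s) (C s) (D s)) (block_mx A' B' C' D').
Proof.
move=> hA hB hC hD i j.
rewrite -[i](@splitK m1 m2) -[j](@splitK n1 n2).
case: (fintype.split i) => i'; case: (fintype.split j) => j' /=.
- have -> : (fun s => block_mx (A s) (B s) (C s) (D s) (lshift m2 i') (lshift n2 j')) = (fun s => A s i' j').
    by apply/funext => s; rewrite block_mxEul.
  by rewrite block_mxEul.
- have -> : (fun s => block_mx (A s) (B s) (C s) (D s) (lshift m2 i') (rshift n1 j')) = (fun s => B s i' j').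
    by apply/funext => s; rewrite block_mxEur.
  by rewrite block_mxEur.
- have -> : (fun s => block_mx (A s) (B s) (C s) (D s) (rshift m1 i') (lshift n2 j')) = (fun s => C s i' j').
    by apply/funext => s; rewrite block_mxEdl.
  by rewrite block_mxEdl.
- have -> : (fun s => block_mx (A s) (B s) (C s) (D s) (rshift m1 i') (rshift n1 j')) = (fun s => D s i' j').
    by apply/funext => s; rewrite block_mxEdr.
  by rewrite block_mxEdr.
Qed.

End Der.

Lemma trD (R : pzRingType) m k (A B : 'M[R]_(m, k)) : (A + B)^T = A^T + B^T.
Proof. by apply/matrixP => i j; rewrite !mxE. Qed.
Lemma trN (R : pzRingType) m k (A : 'M[R]_(m, k)) : (- A)^T = - A^T.
Proof. by apply/matrixP => i j; rewrite !mxE. Qed.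
Lemma trZ (R : pzRingType) m k (c : R) (A : 'M[R]_(m, k)) : (c *: A)^T = c *: A^T.
Proof. by apply/matrixP => i j; rewrite !mxE. Qed.
Ltac mxexp := repeat progress (rewrite ?(scalerDr, scalerN, scalerBr, scalerA, mulmxDl, mulmxDr, mulmxN, mulNmx, mulmxBl, mulmxBr, trmxK, trmx_mul, trD, trN, trZ); rewrite -?scalemxAl -?scalemxAr -?mulmxA).
Ltac mxring := let i := fresh "i" in let j := fresh "j" in
  apply/matrixP => i j; rewrite !mxE;
  match goal with |- @eq _ ?a ?b => change (@eq (Real.sort _) a b) end; ring.

Ltac mxfield := let i := fresh "i" in let j := fresh "j" in
  apply/matrixP => i j; rewrite !mxE;
  match goal with |- @eq _ ?a ?b => change (@eq (Real.sort _) a b) end; field; rewrite ?pnatr_eq0 //.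

Section Alg.
Variable R : realType.
Variables n r : nat.
Implicit Types x p G : 'M[R]_(n, r).

Lemma lax_comm (Ph : 'M[R]_n) (Ps : 'M[R]_r) x G (kappa lam : R) :
 let L := block_mx (-(lam *: Ph)) (x + lam^+2 *: G) (-x^T - lam^+2 *: G^T) ((lam*kappa) *: Ps) in
 let A := block_mx (-Ph) (lam *: G) (-(lam *: G^T)) (kappa *: Ps) in
 L *m A - A *m L = block_mx (lam *: (G *m x^T - x *m G^T)) (Ph *m x + kappa *: (x *m Ps))
    (x^T *m Ph + kappa *: (Ps *m x^T)) (lam *: (G^T *m x - x^T *m G)).
Proof.
move=> L A; rewrite /L /A !mulmx_block opp_block_mx add_block_mx.
mxexp.
by congr block_mx; mxring.
Qed.

Definition Phid x p (dx dp : 'M[R]_(n, r)) : 'M[R]_n :=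
  dp *m x^T + p *m dx^T - (dx *m p^T + x *m dp^T).
Definition Psid x p (dx dp : 'M[R]_(n, r)) : 'M[R]_r :=
  dx^T *m p + x^T *m dp - (dp^T *m x + p^T *m dx).

Lemma F1 (kappa : R) x p : x^T *m x = 1%:M -> x^T *m p + p^T *m x = 0 ->
  Phi x p *m x + kappa *: (x *m Psi x p) = Xdot_rhs kappa x p.
Proof.
move=> h1 h2.
have h3 : x^T *m p = - (p^T *m x) by apply/eqP; rewrite -subr_eq0 opprK h2.
rewrite /Phi /Psi /Xdot_rhs; mxexp; rewrite h1 h3 mulmx1; mxexp.
mxring.
Qed.

Lemma F2 (kappa : R) G x p :
  Phid x p (Xdot_rhs kappa x p) (Pdot_rhs kappa G x p) = x *m G^T - G *m x^T.
Proof.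
rewrite /Phid /Xdot_rhs /Pdot_rhs /Lambda; mxexp; rewrite -?mulmxA.
mxring.
Qed.

Lemma F4 (kappa : R) G x p : x^T *m x = 1%:M ->
  Psid x p (Xdot_rhs kappa x p) (Pdot_rhs kappa G x p) = G^T *m x - x^T *m G.
Proof.
move=> h1.
have hx : forall k (M : 'M[R]_(r, k)), x^T *m (x *m M) = M by move=> k M; rewrite mulmxA h1 mul1mx.
rewrite /Psid /Xdot_rhs /Pdot_rhs /Lambda; mxexp; rewrite ?hx h1 ?mulmx1; mxexp.
mxfield.
Qed.

Lemma Ftan (kappa : R) G x p : x^T *m x = 1%:M ->
  (Xdot_rhs kappa x p)^T *m p + x^T *m (Pdot_rhs kappa G x p) +
  ((Pdot_rhs kappa G x p)^T *m x + p^T *m Xdot_rhs kappa x p) = 0.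
Proof.
move=> h1.
have hx : forall k (M : 'M[R]_(r, k)), x^T *m (x *m M) = M by move=> k M; rewrite mulmxA h1 mul1mx.
rewrite /Xdot_rhs /Pdot_rhs /Lambda; mxexp; rewrite ?hx; mxexp.
rewrite ?h1 ?mulmx1; mxexp.
mxfield.
Qed.

Lemma Flin x p dx p1 p2 :
  Phid x p dx p1 - Phid x p dx p2 = (p1 - p2) *m x^T - x *m (p1 - p2)^T.
Proof. rewrite /Phid; mxexp; mxring. Qed.

Lemma Flin2 x p dx p1 p2 :
  (dx^T *m p + x^T *m p1 + (p1^T *m x + p^T *m dx)) -
  (dx^T *m p + x^T *m p2 + (p2^T *m x + p^T *m dx)) =
  x^T *m (p1 - p2) + (p1 - p2)^T *m x.
Proof. mxexp; mxring. Qed.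

Lemma Fq x (q : 'M[R]_(n, r)) : x^T *m x = 1%:M -> q *m x^T = x *m q^T ->
  x^T *m q + q^T *m x = 0 -> q = 0.
Proof.
move=> h1 h2 h3.
have e1 : q = x *m (q^T *m x) by rewrite mulmxA -h2 -mulmxA h1 mulmx1.
have e2 : x^T *m q = q^T *m x by rewrite {1}e1 mulmxA h1 mul1mx.
have e3 : x^T *m q = 0.
  have -> : x^T *m q = 2^-1 *: (x^T *m q + q^T *m x) by rewrite -e2; mxfield.
  by rewrite h3 scaler0.
have e4 : q^T *m x = 0 by rewrite -e2.
by rewrite e1 e4 mulmx0.
Qed.

End Alg.

Lemma lax_comm' (R : realType) n r (kappa lam : R) (G x p : 'M[R]_(n, r)) :
  Lmat kappa G lam x p *m Amat kappa G lam x p - Amat kappa G lam x p *m Lmat kappa G lam x p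
  = block_mx (lam *: (G *m x^T - x *m G^T)) (Phi x p *m x + kappa *: (x *m Psi x p))
    (x^T *m Phi x p + kappa *: (Psi x p *m x^T)) (lam *: (G^T *m x - x^T *m G)).
Proof. exact: (lax_comm (Phi x p) (Psi x p) x G kappa lam). Qed.

Theorem theorem4 (R : realType) (n r : nat) (kappa : R) (Gamma : 'M[R]_(n, r))
  (X P : R -> 'M[R]_(n, r)) :
  -1 < kappa ->
  (kappa = 1 \/ Gamma = 0) ->
  (forall t, in_TVstar (X t) (P t)) ->
  mx_derivable X -> mx_derivable P ->
  ((forall t, mx_deriv X t = Xdot_rhs kappa (X t) (P t) /\
              mx_deriv P t = Pdot_rhs kappa Gamma (X t) (P t))
   <->
   (forall lam t,
      mx_deriv (fun s => Lmat kappa Gamma lam (X s) (P s)) t =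
      Lmat kappa Gamma lam (X t) (P t) *m Amat kappa Gamma lam (X t) (P t)
      - Amat kappa Gamma lam (X t) (P t) *m Lmat kappa Gamma lam (X t) (P t))).
Proof.
move=> _ hk hC dX dP.
have hL : forall lam t, mx_deriv (fun s => Lmat kappa Gamma lam (X s) (P s)) t =
  block_mx (-(lam *: Phid (X t) (P t) (mx_deriv X t) (mx_deriv P t))) (mx_deriv X t)
    (-(mx_deriv X t)^T) ((lam * kappa) *: Psid (X t) (P t) (mx_deriv X t) (mx_deriv P t)).
  move=> lam t.
  have hX : mxD t X (mx_deriv X t) := mxD_of t dX.
  have hP : mxD t P (mx_deriv P t) := mxD_of t dP.
  apply: mxD_deriv; rewrite /Lmat /Phi /Psi.
  have := mxD_block (mxD_opp (mxD_scale lam (mxD_sub (mxD_mul hP (mxD_tr hX)) (mxD_mul hX (mxD_tr hP)))))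
    (mxD_add hX (mxD_scale (lam ^+ 2) (mxD_cst t Gamma)))
    (mxD_sub (mxD_opp (mxD_tr hX)) (mxD_scale (lam ^+ 2) (mxD_cst t Gamma^T)))
    (mxD_scale (lam * kappa) (mxD_sub (mxD_mul (mxD_tr hX) hP) (mxD_mul (mxD_tr hP) hX))).
  by rewrite !scaler0 addr0 subr0.
have hD : forall t, (mx_deriv X t)^T *m P t + (X t)^T *m mx_deriv P t +
    ((mx_deriv P t)^T *m X t + (P t)^T *m mx_deriv X t) = 0.
  move=> t.
  have hX : mxD t X (mx_deriv X t) := mxD_of t dX.
  have hP : mxD t P (mx_deriv P t) := mxD_of t dP.
  have h : mxD t (fun s => (X s)^T *m P s + (P s)^T *m X s) _ :=
    mxD_add (mxD_mul (mxD_tr hX) hP) (mxD_mul (mxD_tr hP) hX).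
  have e : (fun s => (X s)^T *m P s + (P s)^T *m X s) = (fun _ => 0).
    by apply/funext => s; case: (hC s).
  by rewrite -(mxD_deriv h) e (mxD_deriv (mxD_cst t 0)).
split.
- move=> H lam t; case: (H t) => eX eP.
  rewrite hL lax_comm' eX eP; case: (hC t) => h1 h2.
  congr block_mx.
  + by rewrite F2 -scalerN opprB.
  + by rewrite F1.
  + by rewrite -F1 // /Phi /Psi; mxexp; mxring.
  + rewrite F4 //; case: hk => [-> | ->]; first by rewrite mulr1.
    by rewrite trmx0 mul0mx mulmx0 subrr !scaler0.
- move=> H t; case: (hC t) => h1 h2.
  have := H 1 t; rewrite hL lax_comm' => /eq_block_mx [e11 e12 _ _].
  have eX : mx_deriv X t = Xdot_rhs kappa (X t) (P t) by rewrite e12 F1.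
  split=> //.
  apply/eqP; rewrite -subr_eq0; apply/eqP; apply: (Fq h1).
  + have e1 : Phid (X t) (P t) (mx_deriv X t) (mx_deriv P t) =
              Phid (X t) (P t) (mx_deriv X t) (Pdot_rhs kappa Gamma (X t) (P t)).
      rewrite eX F2; move: e11; rewrite eX !scale1r => e11.
      by rewrite -[LHS]opprK e11 opprB.
    by apply/eqP; rewrite -subr_eq0 -(Flin (X t) (P t) (mx_deriv X t)) e1 subrr.
  + rewrite -(Flin2 (X t) (P t) (mx_deriv X t)) hD eX Ftan //.
    by rewrite subrr.
Qed.
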